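(* Suppose the probability measure $pr$ satisfies: for every $B\in\Delta$ and all distinct objects $a,b\in U\setminus\mathrm{inds}_B$, $$pr(F\bar G_b\mid FG_a\wedge B)\le pr(F\bar G_b\mid B).$$ Then for every object $a\in U$ and every $D\in\delta$ that determines neither $FG_a$ nor $H$, Nicod's condition holds: $$pr(H\mid FG_a\wedge D)>pr(H\mid D).$$
   Context: Fix an integer $N\ge 1$, the universe $U=\{1,\dots,N\}$ of distinct objects, and two monadic predicates $F,G$. For an object $b$ write $F_b$ (''$b$ is $F$''), $G_b$, and $F{\to}G_b:=F_b\to G_b$, $F\bar G_b:=F_b\wedge\neg G_b$, $FG_b:=F_b\wedge G_b$, $\bar FG_b:=\neg F_b\wedge G_b$, $\bar F\bar G_b:=\neg F_b\wedge\neg G_b$. For a 1-place predicate $\psi$ and objects $b_1,\dots,b_n$ write $\psi_{b_1:b_n}:=\psi_{b_1}\wedge\dots\wedge\psi_{b_n}$ (the tautology $\top$ if the list is empty). The hypothesis is $H:=\bigwedge_{b\in U}(F_b\to G_b)$. The sample space $\Omega$ is the set of complete description vectors, i.e. all truth assignments to the atoms $F_b,G_b$ ($b\in U$); a proposition $\rho$ is identified with the event $\{o\in\Omega:o\models\rho\}$, $pr$ is a probability measure on the power set of $\Omega$, and $pr(\rho)$ denotes the probability of that event. Standing assumption (Cournot's principle): $0<pr(\rho)<1$ for every proposition $\rho$ that is neither valid nor unsatisfiable. A proposition $D$ determines $\rho$ if $D\models\rho$ or $D\models\neg\rho$. $\Delta$ is the set of consistent propositions logically equivalent to a conjunction $\bigwedge_{x=1}^{k}\psi^x_{b_x}$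 ($k\ge 0$) with $b_1,\dots,b_k\in U$ pairwise distinct and each $\psi^x$ one of the predicates $F,\neg F,G,\neg G,\bar F\bar G,\neg\bar F\bar G,\bar FG,\neg\bar FG,F\bar G,F{\to}G,FG,\neg FG$; for such $\rho$, $\mathrm{inds}_\rho:=\{b_1,\dots,b_k\}$ (so $\top\in\Delta$ with $\mathrm{inds}_\top=\emptyset$). $\delta\subseteq\Delta$ is the set of such conjunctions in which every $\psi^x\in\{\bar F\bar G,\bar FG,FG\}$ (complete descriptions of some objects, none of them a counterexample to $H$). *)

(* Defs.v *)
From HB Require Import structures.
From mathcomp Require Import all_boot all_order all_algebra.
Set Implicit Arguments. Unset Strict Implicit. Unset Printing Implicit Defensive.
Import Order.TTheory GRing.Theory Num.Theory.
Local Open Scope ring_scope.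

(* Objects 1..N are represented by 'I_N.  A complete description vector
   assigns to each object b the pair (F_b, G_b). *)
Definition Omega (N : nat) := {ffun 'I_N -> bool * bool}.

(* The twelve 1-place predicates allowed in conjunctions of Delta. *)
Inductive pcode :=
| PF | PnF | PG | PnG
| PnFnG | PnotnFnG
| PnFG | PnotnFG
| PFnG | PFimpG
| PFG | PnotFG.

Definition interp (p : pcode) (x : bool * bool) : bool :=
  let f := x.1 in let g := x.2 in
  match p with
  | PF => f | PnF => ~~ f | PG => g | PnG => ~~ g
  | PnFnG => ~~ f && ~~ g | PnotnFnG => ~~ (~~ f && ~~ g)
  | PnFG => ~~ f && g | PnotnFG => ~~ (~~ f && g)
  | PFnG => f && ~~ g | PFimpG => f ==> g
  | PFG => f && g | PnotFG => ~~ (f && g)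
  end.

(* A conjunction over pairwise distinct objects is given by a partial map
   c : object -> predicate; inds = {b | c b <> None}. Its event: *)
Definition conj_ev (N : nat) (c : 'I_N -> option pcode) : {set Omega N} :=
  [set o : Omega N | [forall b : 'I_N, if c b is Some p then interp p (o b) else true]].

Definition FG_ev (N : nat) (a : 'I_N) : {set Omega N} :=
  [set o : Omega N | (o a).1 && (o a).2].
Definition FnG_ev (N : nat) (b : 'I_N) : {set Omega N} :=
  [set o : Omega N | (o b).1 && ~~ (o b).2].
Definition H_ev (N : nat) : {set Omega N} :=
  [set o : Omega N | [forall b : 'I_N, (o b).1 ==> (o b).2]].

(* D is in delta: a conjunction of complete non-counterexample descriptions. *)
Definition in_delta (N : nat) (D : {set Omega N}) : Prop :=
  exists c : 'I_N -> option pcode,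
    D = conj_ev c /\
    forall b p, c b = Some p -> p = PnFnG \/ p = PnFG \/ p = PFG.

Definition determines (N : nat) (D rho : {set Omega N}) : Prop :=
  D \subset rho \/ D \subset ~: rho.

Definition pr (R : realFieldType) (N : nat) (w : Omega N -> R) (E : {set Omega N}) : R :=
  \sum_(o in E) w o.

Definition is_prob (R : realFieldType) (N : nat) (w : Omega N -> R) : Prop :=
  (forall o, 0 <= w o) /\ \sum_(o : Omega N) w o = 1.

Definition cournot (R : realFieldType) (N : nat) (w : Omega N -> R) : Prop :=
  forall E : {set Omega N}, E != set0 -> E != setT -> 0 < pr w E < 1.

Definition cond (R : realFieldType) (N : nat) (w : Omega N -> R) (A B : {set Omega N}) : R :=
  pr w (A :&: B) / pr w B.

(* Main.v *)
Require Import Defs.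
From HB Require Import structures.
From mathcomp Require Import all_boot all_order all_algebra.
From mathcomp Require Import ring lra.
Import Order.TTheory GRing.Theory Num.Theory.
Local Open Scope ring_scope.

Section Aux.
Variables (R : realFieldType) (N : nat) (w : Omega N -> R).

Lemma pr_ge0 E : (forall o, 0 <= w o) -> 0 <= pr w E.
Proof. by move=> h; apply: sumr_ge0 => o _. Qed.

Lemma pr_split A B : pr w A = pr w (A :&: B) + pr w (A :\: B).
Proof. by rewrite /pr (big_setID B). Qed.

Lemma pr_pos E : is_prob w -> cournot w -> E != set0 -> 0 < pr w E.
Proof.
move=> [h0 h1] hC hE; case: (eqVneq E setT) => [->|hT].
  suff -> : pr w setT = 1 by apply: ltr01.
  by rewrite /pr -h1; apply: eq_bigl => o; rewrite in_setT.
by case/andP: (hC E hE hT).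
Qed.

Definition cs (c : 'I_N -> option pcode) (s : seq 'I_N) : 'I_N -> option pcode :=
  fun b => if b \in s then Some PFimpG else c b.

Lemma in_Es c s o : (o \in conj_ev (cs c s)) =
  [forall b, if b \in s then (o b).1 ==> (o b).2
             else if c b is Some p then interp p (o b) else true].
Proof. by rewrite /conj_ev inE; apply: eq_forallb => b; rewrite /cs; case: (b \in s). Qed.

Lemma Es_cons c b s : c b = None -> conj_ev (cs c (b :: s)) =
  conj_ev (cs c s) :\: FnG_ev b.
Proof.
move=> cb; apply/setP => o; rewrite in_setD !in_Es [_ \in FnG_ev _]inE.
apply/forallP/andP.
- move=> h; split.
    move: (h b); rewrite in_cons eqxx /=; by case: ((o b).1); case: ((o b).2).
  apply/forallP => b'; move: (h b'); rewrite in_cons.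
  case: (eqVneq b' b) => [-> /=|_ //].
  by case: (b \in s) => //=; rewrite cb.
- move=> [hb /forallP h] b'; rewrite in_cons.
  case: (eqVneq b' b) => [-> /=|_ /=]; last exact: h.
  by move: hb; case: ((o b).1); case: ((o b).2).
Qed.

Lemma Es_nil c : conj_ev (cs c [::]) = conj_ev c.
Proof. by apply/setP => o; rewrite in_Es. Qed.

End Aux.
Arguments cs {N}. Arguments in_Es {N}. Arguments Es_cons {N}. Arguments Es_nil {N}.
Arguments pr_split {R N} w. Arguments pr_pos {R N w}. Arguments pr_ge0 {R N w}.

Theorem theorem1 (R : realFieldType) (N : nat) (hN : (0 < N)%N)
  (w : Omega N -> R) (hw : is_prob w) (hC : cournot w)
  (hyp : forall (B : {set Omega N}) (c : 'I_N -> option pcode),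
      B = conj_ev c -> B != set0 ->
      forall a b : 'I_N, a != b -> c a = None -> c b = None ->
        cond w (FnG_ev b) (FG_ev a :&: B) <= cond w (FnG_ev b) B)
  (a : 'I_N) (D : {set Omega N}) (hD : in_delta D)
  (h1 : ~ determines D (FG_ev a)) (h2 : ~ determines D (H_ev N)) :
  cond w (H_ev N) (FG_ev a :&: D) > cond w (H_ev N) D.
Proof.
have hw0 := hw.1.
case: hD => c [hDc hc]; subst D.
have ca : c a = None.
  case E: (c a) => [p|] //; exfalso; apply: h1.
  case: (hc _ _ E) => [hp|[hp|hp]]; subst p; [right|right|left];
    apply/subsetP => o; rewrite /conj_ev !inE => /forallP hh; move: (hh a); rewrite E //=.
  - by case/andP => /negbTE ->.
  - by case/andP => /negbTE ->.
pose o0 : Omega N := [ffun b => match c b with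
   | Some PnFnG => (false, false) | Some PnFG => (false, true) | _ => (true, true) end].
have o0c : forall b, (if c b is Some p then interp p (o0 b) else true : bool).
  move=> b; rewrite ffunE; case E: (c b) => [p|] //.
  by case: (hc _ _ E) => [->|[->|->]].
have o0FG : forall s : seq 'I_N, o0 \in FG_ev a :&: conj_ev (cs c s).
  have o0a : o0 a = (true, true) by rewrite /o0 ffunE ca.
  move=> s; rewrite in_setI in_Es [_ \in FG_ev a]inE o0a /=; apply/forallP => b.
  case: (b \in s) => /=; last by move: (o0c b); case: (c b).

  by rewrite ffunE; case: (c b) => [[]|].
set d := pr w (conj_ev c).
set e := pr w (FG_ev a :&: conj_ev c).
have epos : 0 < e by apply: pr_pos => //; apply/set0Pn; exists o0; rewrite -(Es_nil c); apply: o0FG.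
have dpos : 0 < d by apply: pr_pos => //; apply/set0Pn; exists o0;
  move: (o0FG [::]); rewrite Es_nil inE => /andP[].
have inv : forall s, uniq s -> (forall b, b \in s -> c b = None /\ b != a) ->
   pr w (conj_ev (cs c s)) * e <= pr w (FG_ev a :&: conj_ev (cs c s)) * d.
  elim => [|b s IH] /=.
    by move=> _ _; rewrite Es_nil /d /e mulrC.
  case/andP => bs us hs.
  have [cb ba] := hs b (mem_head _ _).
  have IH' := IH us (fun b' hb' => hs b' (mem_behead (s:=b::s) hb')).
  set Es := conj_ev (cs c s).
  have hB := hyp Es (cs c s) erefl.
  have Esn : Es != set0.
    apply/set0Pn; exists o0; move: (o0FG s); rewrite inE => /andP[] //.
  have an : (a \in s) = false.
    by apply/negbTE/negP => /(fun h => hs a (mem_behead (s:=b::s) h)) [_]; rewrite eqxx.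
  have ab : a != b by rewrite eq_sym.
  have csa : cs c s a = None by rewrite /cs an ca.
  have csb : cs c s b = None by rewrite /cs (negbTE bs) cb.
  have := hB Esn a b ab csa csb.
  rewrite /cond (Es_cons _ _ _ cb).
  set p := pr w (FG_ev a :&: Es).
  set q := pr w Es.
  have ppos : 0 < p by apply: pr_pos => //; apply/set0Pn; exists o0; apply: o0FG.
  have qpos : 0 < q by apply: pr_pos.
  have Ep : pr w (FG_ev a :&: (Es :\: FnG_ev b)) = p - pr w (FnG_ev b :&: (FG_ev a :&: Es)).
    rewrite /p (pr_split w (FG_ev a :&: Es) (FnG_ev b)).
    have -> : FG_ev a :&: (Es :\: FnG_ev b) = FG_ev a :&: Es :\: FnG_ev b.
      by rewrite setIDA.
    by rewrite (setIC (FnG_ev b)); ring.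
  have Eq : pr w (Es :\: FnG_ev b) = q - pr w (FnG_ev b :&: Es).
    by rewrite /q (pr_split w Es (FnG_ev b)) (setIC (FnG_ev b)); ring.
  rewrite Ep Eq.
  set u := pr w (FnG_ev b :&: (FG_ev a :&: Es)).
  set v := pr w (FnG_ev b :&: Es).
  have vq : v <= q.
    by rewrite /q (pr_split w Es (FnG_ev b)) setIC lerDl pr_ge0.
  rewrite ler_pdivrMr // mulrAC ler_pdivlMr // => huv.
  have key : q * ((q - v) * e) <= q * ((p - u) * d).
    have h3 : 0 <= q - v by lra.
    have h4 := ler_wpM2r (ltW dpos) huv.
    have h5 := ler_wpM2l h3 IH'.
    rewrite -/p -/q in h5; nra.
  by rewrite ler_pM2l in key.
pose s := enum [set b | (if c b is None then true else false) && (b != a)].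
have us : uniq s by apply: enum_uniq.
have hs : forall b, b \in s -> c b = None /\ b != a.
  by move=> b; rewrite mem_enum inE; case: (c b) => //= _ ->.
have I := inv s us hs.
set Es := conj_ev (cs c s) in I.
have eq1 : H_ev N :&: (FG_ev a :&: conj_ev c) = FG_ev a :&: Es.
  apply/setP => o; rewrite !in_setI [o \in conj_ev c]inE in_Es [o \in H_ev N]inE [o \in FG_ev a]inE.
  case fg: ((o a).1 && (o a).2) => /=; last by rewrite andbF.
  apply/andP/forallP.
  - move=> [/forallP hH /forallP hD] b.
    by case: (b \in s) => //; move: (hD b).
  - move=> h; split; apply/forallP => b; move: (h b); rewrite /s mem_enum inE.
      case: (eqVneq b a) => [->|ba]; first by rewrite ca; move: fg; case: ((o a).1).
      rewrite andbT; case E: (c b) => [p|] //= hp.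
      by case: (hc _ _ E) hp => [->|[->|->]] /=; case: ((o b).1); case: ((o b).2).
    case: (eqVneq b a) => [->|ba]; first by rewrite ca.
    by rewrite andbT; case E: (c b).
have sub : H_ev N :&: conj_ev c \subset Es.
  apply/subsetP => o; rewrite !in_setI [o \in conj_ev c]inE /Es in_Es [o \in H_ev N]inE => /andP[/forallP hH /forallP hD].
  by apply/forallP => b; case: (b \in s); [apply: hH | apply: hD].
pose o1 : Omega N := [ffun b => if b == a then (true, false) else o0 b].
have o1E : o1 \in Es :\: (H_ev N :&: conj_ev c).
  rewrite in_setD in_setI negb_and /Es in_Es [o1 \in H_ev N]inE; apply/andP; split.
    apply/orP; left; apply/negP => /forallP/(_ a); by rewrite ffunE eqxx.
  apply/forallP => b; rewrite ffunE.
  case: (eqVneq b a) => [->|ba].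
    by rewrite /s mem_enum inE eqxx andbF ca.
  by move: (o0FG s); rewrite in_setI in_Es => /andP[_ /forallP] /(_ b).
have hlt : pr w (H_ev N :&: conj_ev c) < pr w Es.
  rewrite (pr_split w Es (H_ev N :&: conj_ev c)).
  have -> : Es :&: (H_ev N :&: conj_ev c) = H_ev N :&: conj_ev c.
    by apply/setIidPr.
  rewrite ltrDl; apply: pr_pos => //; apply/set0Pn; by exists o1.
rewrite /cond eq1 -/e -/d.
rewrite ltr_pdivrMr // mulrAC ltr_pdivlMr //.
have := ltr_pM2r epos; move=> hh.
apply: (lt_le_trans _ I); by rewrite hh.
Qed.
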